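(* Let $f$ satisfy conditions (1) and (2a) and let $a>0$. Then the series \[ a\,e^{-pr^2}\sum_{n=0}^\infty\frac{c_{2n}(p)\,p^{2n}}{(n!)^2}\,r^{2n} \] is absolutely and uniformly convergent for all $r\in[0,\infty)$ and $p\in[0,\infty)$.
   Context: $f:[0,\infty)\to\mathbb{R}$; $c_n=2\pi\int_0^\infty f(r)\,r^{n+1}dr$ and $c_n(p)=2\pi\int_0^\infty f(r)\,r^{n+1}e^{-pr^2}dr$. Condition (1): there is a constant $F$ with $0\le f(r)\le F$ for all $r\ge0$, $c_0$ exists and $c_0>0$. Condition (2a): $c_{2n}$ exists for all $n\in\mathbb{N}_0$ and $c_n^{1/n}=o(n)$ as $n\to\infty$. *)

(* Defs.v *)
From Stdlib Require Import Reals Arith.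
From Coquelicot Require Import Coquelicot.
Open Scope R_scope.

Definition c_integrand (f : R -> R) (n : nat) : R -> R :=
  fun r => 2 * PI * f r * r ^ (n + 1).

Definition c_exists (f : R -> R) (n : nat) : Prop :=
  ex_RInt_gen (c_integrand f n) (at_point 0) (Rbar_locally p_infty).

Definition c (f : R -> R) (n : nat) : R :=
  RInt_gen (c_integrand f n) (at_point 0) (Rbar_locally p_infty).

Definition cp (f : R -> R) (n : nat) (p : R) : R :=
  RInt_gen (fun r => 2 * PI * f r * r ^ (n + 1) * exp (- p * r ^ 2))
    (at_point 0) (Rbar_locally p_infty).

Definition cond1 (f : R -> R) : Prop :=
  (exists F : R, forall r, 0 <= r -> 0 <= f r <= F) /\
  c_exists f 0 /\ 0 < c f 0.

Definition cond2a (f : R -> R) : Prop :=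
  (forall n : nat, c_exists f (2 * n)) /\
  is_lim_seq (fun n : nat => Rpower (c f n) (/ INR n) / INR n) 0.

Definition term (f : R -> R) (a : R) (n : nat) (r p : R) : R :=
  a * exp (- p * r ^ 2) *
  (cp f (2 * n) p * p ^ (2 * n) / (INR (Factorial.fact n)) ^ 2 * r ^ (2 * n)).

Definition unif_series_cv (u : nat -> R -> R -> R) : Prop :=
  exists S : R -> R -> R, forall eps : R, 0 < eps ->
    exists N : nat, forall n : nat, (N <= n)%nat ->
      forall r p : R, 0 <= r -> 0 <= p ->
        Rabs (S r p - sum_n (fun k => u k r p) n) < eps.

(* Main.v *)
Require Import Defs.
From Stdlib Require Import Reals Lra Lia Factorial ClassicalEpsilon Classical_Prop.
From Coquelicot Require Import Coquelicot.
Open Scope R_scope.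

Lemma unif_lim_ex_RInt (f : R -> R) (a b : R) : a <= b ->
  (forall eps, 0 < eps -> exists phi, ex_RInt phi a b /\
      forall x, a <= x <= b -> Rabs (f x - phi x) <= eps) ->
  ex_RInt f a b.
Proof.
  intros Hab H. apply ex_RInt_Reals_1. intro eps.
  assert (Hd : 0 < eps / (2 * (b - a + 1))).
  { apply Rdiv_lt_0_compat. apply cond_pos. lra. }
  destruct (constructive_indefinite_description _ (H _ Hd)) as [phi [Hphi Happ]].
  assert (He2 : 0 < eps / 2) by (generalize (cond_pos eps); lra).
  destruct (ex_RInt_Reals_0 _ _ _ Hphi (mkposreal _ He2)) as [phi1 [psi1 [H1 H2]]].
  exists phi1.
  exists (mkStepFun (StepFun_P28 (eps / (2 * (b - a + 1))) psi1 (mkStepFun (StepFun_P4 a b 1)))).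
  split.
  - intros t Ht. simpl. unfold fct_cte.
    rewrite Rmin_left in Ht by lra. rewrite Rmax_right in Ht by lra.
    specialize (Happ t Ht). specialize (H1 t).
    rewrite Rmin_left in H1 by lra. rewrite Rmax_right in H1 by lra.
    specialize (H1 Ht).
    replace (f t - phi1 t) with ((f t - phi t) + (phi t - phi1 t)) by ring.
    eapply Rle_trans. apply Rabs_triang. lra.
  - rewrite StepFun_P30. rewrite StepFun_P18. simpl in H2.
    eapply Rle_lt_trans. apply Rabs_triang.
    rewrite (Rabs_right (eps / (2 * (b - a + 1)) * (1 * (b - a)))).
    2:{ apply Rle_ge. apply Rmult_le_pos. lra. lra. }
    assert (eps / (2 * (b - a + 1)) * (1 * (b - a)) <= eps / 2).
    { assert (Hq: (b-a)/(b-a+1) <= 1).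
      { unfold Rdiv; apply Rmult_le_reg_r with (b-a+1); [lra|].
        rewrite Rmult_assoc, Rinv_l by lra; lra. }
      replace (eps / (2 * (b - a + 1)) * (1 * (b - a))) with
        (eps / 2 * ((b - a) / (b - a + 1))) by (field; lra).
      assert (0 <= (b-a)/(b-a+1)) by (apply Rdiv_le_0_compat; lra).
      generalize (cond_pos eps); nra. }
    lra.
Qed.

Lemma prod_ex_RInt (g phi : R -> R) (a b : R) : a <= b -> ex_RInt g a b ->
  (forall x, a <= x <= b -> continuity_pt phi x) ->
  ex_RInt (fun x => g x * phi x) a b.
Proof.
  intros Hab Hg Hphi.
  destruct (ex_RInt_ub _ _ _ Hg) as [G HG].
  assert (HG' : forall t, a <= t <= b -> Rabs (g t) <= G).
  { intros t Ht. apply (HG t). rewrite Rmin_left, Rmax_right; lra. }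
  clear HG.
  assert (HU := Heine phi (fun x => a <= x <= b) (compact_P3 a b) Hphi).
  apply unif_lim_ex_RInt; auto.
  intros eps Heps.
  assert (He' : 0 < eps / (Rabs G + 1)).
  { apply Rdiv_lt_0_compat; auto. generalize (Rabs_pos G); lra. }
  destruct (HU (mkposreal _ He')) as [delta Hdelta]. simpl in Hdelta.
  set (d := delta / 2).
  assert (Hd : 0 < d) by (unfold d; generalize (cond_pos delta); lra).
  assert (Hind : forall n : nat, forall c, a <= c <= b -> c - a <= INR n * d ->
     exists psi, ex_RInt psi a c /\
       forall x, a <= x <= c -> Rabs (g x * phi x - psi x) <= eps).
  { induction n as [|n IH].
    - intros c Hc Hca. simpl in Hca. exists (fun x => g x * phi x). split.
      + replace c with a by lra. apply ex_RInt_point.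
      + intros x Hx. rewrite Rminus_eq_0, Rabs_R0. lra.
    - intros c Hc Hca.
      set (c' := Rmax a (c - d)).
      assert (Hc'1 : a <= c') by apply Rmax_l.
      assert (Hc'2 : c' <= c) by (unfold c'; apply Rmax_lub; lra).
      assert (Hc'3 : c' - a <= INR n * d).
      { unfold c'. apply Rmax_case_strong; intros.
        - rewrite Rminus_eq_0. apply Rmult_le_pos. apply pos_INR. lra.
        - rewrite S_INR in Hca. lra. }
      destruct (IH c' ltac:(lra) Hc'3) as [psi' [Hpsi' Happ']].
      exists (fun x => if Rle_dec x c' then psi' x else g x * phi c).
      split.
      + apply ex_RInt_Chasles with c'.
        * apply ex_RInt_ext with psi'; auto.
          intros x Hx. rewrite Rmin_left, Rmax_right in Hx by lra.
          destruct (Rle_dec x c'); [reflexivity | lra].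
        * apply ex_RInt_ext with (fun x => scal (phi c) (g x)).
          { intros x Hx. rewrite Rmin_left, Rmax_right in Hx by lra.
            destruct (Rle_dec x c'); [lra|]. unfold scal; simpl.
            unfold mult; simpl. ring. }
          apply (ex_RInt_scal g c' c (phi c)).
          apply (@ex_RInt_Chasles_2 R_CompleteNormedModule g a). lra.
          apply (@ex_RInt_Chasles_1 R_CompleteNormedModule g a c b). lra. auto.
      + intros x Hx. destruct (Rle_dec x c') as [Hxc|Hxc].
        * apply Happ'. lra.
        * rewrite <- Rmult_minus_distr_l, Rabs_mult.
          assert (Hx1 : Rabs (g x) <= G) by (apply HG'; lra).
          assert (Hx2 : Rabs (phi x - phi c) < eps / (Rabs G + 1)).
          { apply Hdelta; try lra.
            unfold c' in Hxc. apply Rnot_le_lt in Hxc.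
            generalize (Rmax_r a (c - d)); intro.
            rewrite Rabs_left1 by lra. unfold d in *. generalize (cond_pos delta). lra. }
          assert (Hx3 : eps / (Rabs G + 1) * (Rabs G + 1) = eps) by (field; generalize (Rabs_pos G); lra).
          rewrite <- Hx3, Rmult_comm.
          apply Rmult_le_compat; try apply Rabs_pos; try lra.
          generalize (Rle_abs G); lra. }
  destruct (nfloor_ex ((b - a) / d)) as [n Hn].
  { apply Rdiv_le_0_compat; lra. }
  destruct (Hind (S n) b ltac:(lra)) as [psi [Hpsi Happ]].
  { rewrite S_INR. destruct Hn as [_ Hn].
    apply Rmult_lt_compat_r with (r := d) in Hn; auto.
    unfold Rdiv in Hn. rewrite Rmult_assoc, Rinv_l in Hn by lra. lra. }
  exists psi. split; auto.
Qed.

Definition hk (p : R) (k : nat) (x : R) : R := x ^ k * exp (- p * x ^ 2).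

Lemma hk_cont p k x : continuous (hk p k) x.
Proof. apply (@ex_derive_continuous R_AbsRing R_NormedModule). unfold hk. auto_derive. auto. Qed.

Lemma hk_ex p k a b : ex_RInt (hk p k) a b.
Proof. apply (@ex_RInt_continuous R_CompleteNormedModule). intros; apply hk_cont. Qed.

Lemma hk_deriv p k x : p <> 0 ->
  is_derive (fun y => - (y ^ (S k) * exp (- p * y ^ 2)) / (2 * p)) x
    (hk p (S (S k)) x - INR (S k) / (2 * p) * hk p k x).
Proof.
  intros Hp. auto_derive. auto. unfold hk. simpl pred.
  change (match k with | 0%nat => 1 | S _ => INR k + 1 end) with (INR (S k)).
  rewrite S_INR. simpl. field. auto.
Qed.

Lemma hk_step p k b : 0 < p -> 0 <= b ->
  RInt (hk p (S (S k))) 0 b <= INR (S k) / (2 * p) * RInt (hk p k) 0 b.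
Proof.
  intros Hp Hb.
  set (F := fun y => - (y ^ (S k) * exp (- p * y ^ 2)) / (2 * p)).
  assert (H1 : is_RInt (fun x => hk p (S (S k)) x - INR (S k) / (2 * p) * hk p k x) 0 b
                 (minus (F b) (F 0))).
  { apply (@is_RInt_derive R_CompleteNormedModule F).
    - intros x _. apply hk_deriv. lra.
    - intros x _. apply (@ex_derive_continuous R_AbsRing R_NormedModule).
      unfold hk. auto_derive. auto. }
  assert (H2 := @RInt_correct R_CompleteNormedModule (hk p k) 0 b (hk_ex p k 0 b)).
  assert (H3 := is_RInt_plus _ _ _ _ _ _ H1 (is_RInt_scal _ _ _ (INR (S k) / (2 * p)) _ H2)).
  assert (H4 : RInt (hk p (S (S k))) 0 b =
     plus (minus (F b) (F 0)) (scal (INR (S k) / (2 * p)) (RInt (hk p k) 0 b))).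
  { apply is_RInt_unique. eapply is_RInt_ext; [|exact H3].
    intros x _. unfold plus, scal; simpl. unfold mult; simpl. ring. }
  rewrite H4. unfold plus, minus, scal, opp; simpl. unfold mult, plus, opp; simpl.
  unfold F. rewrite pow_i by lia. rewrite Rmult_0_l, Ropp_0.
  assert (0 <= b ^ S k * exp (- p * b ^ 2)).
  { apply Rmult_le_pos. apply pow_le; auto. apply Rlt_le, exp_pos. }
  assert (0 <= b ^ S k * exp (- p * b ^ 2) / (2 * p)).
  { apply Rdiv_le_0_compat; lra. }
  unfold Rdiv in *. rewrite Rmult_0_l. lra.
Qed.

Lemma hk_base p b : 0 < p -> 0 <= b -> RInt (hk p 1) 0 b <= 1 / (2 * p).
Proof.
  intros Hp Hb.
  set (F := fun y => - exp (- p * y ^ 2) / (2 * p)).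
  assert (H1 : is_RInt (hk p 1) 0 b (minus (F b) (F 0))).
  { apply (@is_RInt_derive R_CompleteNormedModule F).
    - intros x _. unfold F, hk. auto_derive. auto. simpl. field. lra.
    - intros x _. apply hk_cont. }
  rewrite (is_RInt_unique _ _ _ _ H1).
  unfold minus, plus, opp; simpl. unfold F.
  replace (0 ^ 2) with 0 by ring. rewrite Rmult_0_r, exp_0.
  assert (0 < exp (- p * b ^ 2)) by apply exp_pos.
  assert (0 < exp (- p * b ^ 2) / (2 * p)) by (apply Rdiv_lt_0_compat; lra).
  unfold Rdiv in *. lra.
Qed.

Lemma gamma_bound p n b : 0 < p -> 0 <= b ->
  RInt (hk p (2 * n + 1)) 0 b <= INR (Factorial.fact n) / (2 * p ^ (n + 1)).
Proof.
  intros Hp Hb. induction n as [|n IH].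
  - simpl. replace (p * 1) with p by ring. apply hk_base; auto.
  - replace (2 * S n + 1)%nat with (S (S (2 * n + 1))) by lia.
    eapply Rle_trans. apply hk_step; auto.
    assert (0 <= INR (S (2 * n + 1)) / (2 * p)).
    { apply Rdiv_le_0_compat. apply pos_INR. lra. }
    eapply Rle_trans. apply Rmult_le_compat_l. auto. exact IH.
    right. rewrite fact_simpl, mult_INR.
    replace (S (2 * n + 1)) with (2 * S n)%nat by lia.
    rewrite mult_INR. replace (S n + 1)%nat with (S (n + 1)) by lia.
    simpl pow. simpl (INR 2). field.
    split. apply pow_nonzero. lra. lra.
Qed.

Lemma sum_nm_nonneg (a : nat -> R) N M : (forall n, 0 <= a n) -> 0 <= sum_n_m a N M.
Proof.
  intros Ha. induction M as [|M IH].
  - destruct N. rewrite sum_n_n. auto. rewrite sum_n_m_zero by lia. unfold zero; simpl; lra.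
  - destruct (Compare_dec.le_lt_dec N (S M)).
    + rewrite sum_n_Sm by lia. unfold plus; simpl. generalize (Ha (S M)); lra.
    + rewrite sum_n_m_zero by lia. unfold zero; simpl; lra.
Qed.

Lemma sum_nm_le_sum_n (a : nat -> R) N M : (forall n, 0 <= a n) ->
  sum_n_m a N M <= sum_n a M.
Proof.
  intros Ha. unfold sum_n. destruct N as [|N]. lra.
  destruct (Compare_dec.le_lt_dec (S N) M).
  - rewrite (sum_n_m_Chasles a 0 N M) by lia. unfold plus; simpl.
    generalize (sum_nm_nonneg a 0 N Ha); lra.
  - rewrite (sum_n_m_zero a (S N) M) by lia. unfold zero; simpl. apply sum_nm_nonneg; auto.
Qed.

Definition ex_term (x : R) (n : nat) : R := x ^ n / INR (fact n).

Lemma ex_term_nonneg x n : 0 <= x -> 0 <= ex_term x n.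
Proof.
  intros. unfold ex_term. apply Rdiv_le_0_compat. apply pow_le; auto.
  apply lt_0_INR, lt_O_fact.
Qed.

Lemma exp_series x : is_series (ex_term x) (exp x).
Proof.
  generalize (is_exp_Reals x). unfold is_pseries. apply is_series_ext.
  intros n. rewrite pow_n_pow. unfold scal; simpl. unfold mult; simpl.
  unfold ex_term. unfold Rdiv. ring.
Qed.

Lemma exp_sum_le x N M : 0 <= x -> sum_n_m (ex_term x) N M <= exp x.
Proof.
  intros Hx. eapply Rle_trans. apply sum_nm_le_sum_n. intros; apply ex_term_nonneg; auto.
  apply is_lim_seq_incr_compare. apply (exp_series x).
  intros n. rewrite sum_Sn. unfold plus; simpl. generalize (ex_term_nonneg x (S n) Hx). lra.
Qed.

Lemma exp_tail x : 0 <= x -> forall eps, 0 < eps -> exists N0, forall N M,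
  (N0 <= N)%nat -> sum_n_m (ex_term x) N M < eps.
Proof.
  intros Hx eps Heps.
  assert (HC := Cauchy_ex_series (ex_term x) (ex_intro _ _ (exp_series x))).
  destruct (HC (mkposreal _ Heps)) as [N0 HN0].
  exists N0. intros N M HN.
  destruct (Compare_dec.le_lt_dec N M).
  - specialize (HN0 N M HN ltac:(lia)). simpl in HN0.
    eapply Rle_lt_trans. 2: exact HN0. apply Rle_abs.
  - rewrite sum_n_m_zero by lia. unfold zero; simpl; lra.
Qed.

Lemma is_RInt_sum (F : nat -> R -> R) a b N M : (forall n, ex_RInt (F n) a b) ->
  is_RInt (fun x => sum_n_m (fun n => F n x) N M) a b
          (sum_n_m (fun n => RInt (F n) a b) N M).
Proof.
  intros HF.
  assert (Hz : forall K, (K < N)%nat ->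
     is_RInt (fun x => sum_n_m (fun n => F n x) N K) a b
          (sum_n_m (fun n => RInt (F n) a b) N K)).
  { intros K HK. rewrite sum_n_m_zero by lia.
    apply (is_RInt_ext (fun _ => zero)).
    - intros x _. rewrite sum_n_m_zero by lia. reflexivity.
    - generalize (@is_RInt_const R_NormedModule a b zero). unfold scal, zero; simpl; unfold mult; simpl. rewrite Rmult_0_r. auto. }
  induction M as [|M IH].
  - destruct N.
    + apply (is_RInt_ext (F 0%nat)).
      * intros x _. rewrite sum_n_n. reflexivity.
      * rewrite sum_n_n. apply (@RInt_correct R_CompleteNormedModule). auto.
    + apply Hz. lia.
  - destruct (Compare_dec.le_lt_dec N (S M)).
    + rewrite sum_n_Sm by lia.
      apply (is_RInt_ext (fun x => plus (sum_n_m (fun n => F n x) N M) (F (S M) x))).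
      * intros x _. rewrite sum_n_Sm by lia. reflexivity.
      * assert (IH' : is_RInt (fun x : R => sum_n_m (fun n : nat => F n x) N M) a b
                  (sum_n_m (fun n : nat => RInt (F n) a b) N M)).
        { destruct (Compare_dec.le_lt_dec N M). apply IH. apply Hz. lia. }
        assert (H2 := @RInt_correct R_CompleteNormedModule (F (S M)) a b (HF _)).
        exact (is_RInt_plus _ _ _ _ _ _ IH' H2).
    + apply Hz. lia.
Qed.

Lemma gen_extract (g : R -> R) l : is_RInt_gen g (at_point 0) (Rbar_locally p_infty) l ->
  forall eps, 0 < eps -> exists M, forall y, M < y ->
    exists z, is_RInt g 0 y z /\ Rabs (z - l) < eps.
Proof.
  intros H eps He.
  assert (HP : locally l (fun z : R => Rabs (z - l) < eps)).
  { exists (mkposreal eps He). intros y Hy. exact Hy. }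
  specialize (H _ HP). destruct H as [Q R HQ HR Hall].
  destruct HR as [M HM]. exists M. intros y Hy.
  exact (Hall 0 y HQ (HM y Hy)).
Qed.

Lemma gen_ex_RInt (g : R -> R) l : is_RInt_gen g (at_point 0) (Rbar_locally p_infty) l ->
  forall b, 0 <= b -> ex_RInt g 0 b.
Proof.
  intros H b Hb. destruct (gen_extract g l H 1 Rlt_0_1) as [M HM].
  destruct (HM (Rmax M b + 1)) as [z [Hz _]].
  { generalize (Rmax_l M b); lra. }
  apply (@ex_RInt_Chasles_1 R_CompleteNormedModule g 0 b (Rmax M b + 1)).
  generalize (Rmax_r M b); lra. exists z. exact Hz.
Qed.

Lemma gen_tail (g : R -> R) l : is_RInt_gen g (at_point 0) (Rbar_locally p_infty) l ->
  forall eps, 0 < eps -> exists B, 0 <= B /\ forall b, B <= b -> RInt g B b <= eps.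
Proof.
  intros H eps He. destruct (gen_extract g l H (eps / 2)) as [M HM]. lra.
  set (B := Rmax M 0 + 1). exists B.
  assert (HB : M < B /\ 0 <= B) by (unfold B; generalize (Rmax_l M 0) (Rmax_r M 0); lra).
  split. lra.
  intros b Hb.
  destruct (HM B ltac:(lra)) as [z1 [Hz1 Hl1]].
  destruct (HM b ltac:(lra)) as [z2 [Hz2 Hl2]].
  assert (E : @eq R (RInt g B b) (RInt g 0 b - RInt g 0 B)).
  { assert (C := RInt_Chasles g 0 B b (ex_intro _ z1 Hz1)
       (@ex_RInt_Chasles_2 R_CompleteNormedModule g 0 B b ltac:(lra) (ex_intro _ z2 Hz2))).
    unfold plus in C; simpl in C. rewrite <- C. unfold Rminus. rewrite (Rplus_comm (RInt g 0 B)), Rplus_assoc, Rplus_opp_r, Rplus_0_r. reflexivity. }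
  rewrite E. rewrite (is_RInt_unique _ _ _ _ Hz1), (is_RInt_unique _ _ _ _ Hz2).
  apply Rabs_def2 in Hl1. apply Rabs_def2 in Hl2. lra.
Qed.

Lemma mono_lim (H : R -> R) K : (forall x, 0 <= x -> 0 <= H x) ->
  (forall b, 0 <= b -> ex_RInt H 0 b) -> (forall b, 0 <= b -> RInt H 0 b <= K) ->
  0 <= RInt_gen H (at_point 0) (Rbar_locally p_infty) /\
  forall eps, 0 < eps -> exists b0, forall b, b0 < b ->
     Rabs (RInt H 0 b - RInt_gen H (at_point 0) (Rbar_locally p_infty)) < eps.
Proof.
  intros Hpos Hex Hle.
  assert (Hmono : forall b b', 0 <= b -> b <= b' -> RInt H 0 b <= RInt H 0 b').
  { intros b b' Hb Hbb'.
    assert (X2 : ex_RInt H b b').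
    { apply (@ex_RInt_Chasles_2 R_CompleteNormedModule H 0). lra. apply Hex. lra. }
    assert (C := RInt_Chasles H 0 b b' (Hex b Hb) X2).
    unfold plus in C; simpl in C. rewrite <- C.
    assert (0 <= RInt H b b'); [|lra].
    apply RInt_ge_0; auto.
    intros x Hx. apply Hpos. lra. }
  set (E := fun y => exists b, 0 <= b /\ y = RInt H 0 b).
  assert (HEb : bound E). { exists K. intros y [b [Hb ->]]. auto. }
  assert (HE0 : exists y, E y). { exists (RInt H 0 0). exists 0. split; auto; lra. }
  destruct (completeness E HEb HE0) as [l [Hub Hlub]].
  assert (Hconv : forall eps, 0 < eps -> exists b0, 0 <= b0 /\ forall b, b0 < b ->
                   Rabs (RInt H 0 b - l) < eps).
  { intros eps He.
    destruct (Classical_Prop.classic (exists b0, 0 <= b0 /\ l - eps < RInt H 0 b0)) as [[b0 [Hb0 Hb0']]|Hn].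
    - exists b0. split; auto. intros b Hb.
      assert (RInt H 0 b <= l) by (apply Hub; exists b; split; auto; lra).
      assert (RInt H 0 b0 <= RInt H 0 b) by (apply Hmono; lra).
      apply Rabs_def1; lra.
    - exfalso. assert (l <= l - eps); [|lra].
      apply Hlub. intros y [b [Hb ->]].
      apply Rnot_lt_le. intro C. apply Hn. exists b. auto. }
  assert (Hgen : is_RInt_gen H (at_point 0) (Rbar_locally p_infty) l).
  { intros P [eps HP].
    destruct (Hconv eps (cond_pos eps)) as [b0 [Hb0 Hb0']].
    apply Filter_prod with (fun x => x = 0) (fun y => b0 < y).
    - reflexivity.
    - exists b0. auto.
    - intros x y -> Hy. exists (RInt H 0 y). split.
      + apply (@RInt_correct R_CompleteNormedModule). apply Hex. lra.
      + apply HP. apply (Hb0' y Hy). }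
  rewrite (is_RInt_gen_unique H l Hgen).
  split.
  - apply Hub. exists 0. split. lra. rewrite RInt_point. reflexivity.
  - intros eps He. destruct (Hconv eps He) as [b0 [_ Hb0]]. exists b0. auto.
Qed.

Lemma sum_lim_le (u : nat -> R -> R) (l : nat -> R) N M E :
  (forall n, forall eps, 0 < eps -> exists b0, forall b, b0 < b -> Rabs (u n b - l n) < eps) ->
  (forall b, 0 <= b -> sum_n_m (fun n => u n b) N M <= E) ->
  sum_n_m l N M <= E.
Proof.
  intros Hl HE.
  assert (Hlim : forall n, is_lim (u n) p_infty (l n)).
  { intros n. apply is_lim_spec. intros eps. destruct (Hl n eps (cond_pos eps)) as [b0 Hb0].
    exists b0. auto. }
  assert (Hz : forall K, (K < N)%nat ->
     is_lim (fun b => sum_n_m (fun n => u n b) N K) p_infty (sum_n_m l N K)).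
  { intros K HK. rewrite sum_n_m_zero by lia.
    apply (is_lim_ext (fun _ => 0)). intros y. rewrite sum_n_m_zero by lia. reflexivity.
    apply is_lim_const. }
  assert (Hs : is_lim (fun b => sum_n_m (fun n => u n b) N M) p_infty (sum_n_m l N M)).
  { clear HE. induction M as [|M IH].
    - destruct N.
      + apply (is_lim_ext (u 0%nat)). intros y. rewrite sum_n_n. reflexivity.
        rewrite sum_n_n. auto.
      + apply Hz. lia.
    - destruct (Compare_dec.le_lt_dec N (S M)).
      + rewrite sum_n_Sm by lia.
        apply (is_lim_ext (fun b => sum_n_m (fun n => u n b) N M + u (S M) b)).
        intros y. rewrite sum_n_Sm by lia. reflexivity.
        apply is_lim_plus'. 2: apply Hlim.
        destruct (Compare_dec.le_lt_dec N M). apply IH. apply Hz; lia.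
      + apply Hz. lia. }
  assert (Hloc : Rbar_locally' p_infty (fun y => sum_n_m (fun n => u n y) N M <= E)).
  { exists 0. intros x Hx. apply HE. lra. }
  exact (is_lim_le_loc _ _ p_infty _ _ Hloc Hs (is_lim_const E _)).
Qed.

Lemma unif_gen (v : nat -> R -> R -> R) :
  (forall eps, 0 < eps -> exists N0, forall N M, (N0 <= N)%nat -> forall r p, 0 <= r -> 0 <= p ->
      sum_n_m (fun k => Rabs (v k r p)) N M <= eps) ->
  unif_series_cv v.
Proof.
  intros H.
  exists (fun r p => Series (fun k => v k r p)).
  intros eps Heps.
  destruct (H (eps / 2) ltac:(lra)) as [N0 HN0].
  exists N0. intros n Hn r p Hr Hp.
  assert (Hex : ex_series (fun k => v k r p)).
  { apply (@ex_series_Cauchy R_AbsRing R_CompleteNormedModule). intros e.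
    destruct (H (e / 2) ltac:(generalize (cond_pos e); lra)) as [N1 HN1].
    exists N1. intros a b Ha Hb.
    eapply Rle_lt_trans. apply norm_sum_n_m.
    eapply Rle_lt_trans. apply (HN1 a b Ha r p Hr Hp).
    generalize (cond_pos e); lra. }
  assert (Hs := Series_correct _ Hex).
  assert (Hl : is_lim_seq (fun m => sum_n (fun k => v k r p) m - sum_n (fun k => v k r p) n)
                 (Series (fun k => v k r p) - sum_n (fun k => v k r p) n)).
  { apply is_lim_seq_minus'. exact Hs. apply is_lim_seq_const. }
  apply is_lim_seq_abs in Hl.
  assert (Hev : eventually (fun m => Rabs (sum_n (fun k => v k r p) m - sum_n (fun k => v k r p) n) <= eps / 2)).
  { exists (S n). intros m Hm.
    replace (sum_n (fun k => v k r p) m - sum_n (fun k => v k r p) n)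
      with (sum_n_m (fun k => v k r p) (S n) m)
      by (rewrite (@sum_n_m_sum_n R_AbelianGroup) by lia; reflexivity).
    eapply Rle_trans. apply (@norm_sum_n_m R_AbsRing R_NormedModule).
    apply HN0; auto. }
  assert (Hle := is_lim_seq_le_loc _ _ _ _ Hev Hl (is_lim_seq_const (eps / 2))).
  simpl in Hle. lra.
Qed.

Lemma unif_from_cauchy (u : nat -> R -> R -> R) :
  (forall eps, 0 < eps -> exists N0, forall N M, (N0 <= N)%nat -> forall r p, 0 <= r -> 0 <= p ->
      sum_n_m (fun k => Rabs (u k r p)) N M <= eps) ->
  unif_series_cv (fun n r p => Rabs (u n r p)) /\ unif_series_cv u.
Proof.
  intros H. split; apply unif_gen; auto.
  intros eps Heps. destruct (H eps Heps) as [N0 HN0]. exists N0.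
  intros N M HN r p Hr Hp. eapply Rle_trans. 2: apply (HN0 N M HN r p Hr Hp).
  right. apply sum_n_m_ext. intros k. apply Rabs_Rabsolu.
Qed.

Lemma sumK_bound (g sK : R -> R) B T b e :
  0 <= B -> 0 <= b -> 0 <= T ->
  (forall c, 0 <= c -> ex_RInt sK 0 c) -> (forall c, 0 <= c -> ex_RInt g 0 c) ->
  (forall x, 0 <= x -> 0 <= sK x <= g x) -> (forall x, 0 <= x <= B -> sK x <= T * g x) ->
  (forall c, B <= c -> RInt g B c <= e) ->
  RInt sK 0 b <= T * RInt g 0 B + e.
Proof.
  intros HB Hb HT HsK Hgx Hpos HsB Htail.
  assert (He : 0 <= e).
  { eapply Rle_trans. 2: apply (Htail B); lra. rewrite RInt_point. unfold zero; simpl; lra. }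
  assert (Hsub : forall (h : R -> R) x y, 0 <= x -> x <= y -> (forall c, 0 <= c -> ex_RInt h 0 c) -> ex_RInt h x y).
  { intros h x y Hx Hxy Hh. apply (@ex_RInt_Chasles_2 R_CompleteNormedModule h 0). lra. apply Hh. lra. }
  assert (Hgmono : forall c, 0 <= c <= B -> RInt g 0 c <= RInt g 0 B).
  { intros c Hc. assert (C := RInt_Chasles g 0 c B (Hgx c ltac:(lra)) (Hsub g c B ltac:(lra) ltac:(lra) Hgx)).
    unfold plus in C; simpl in C. rewrite <- C.
    assert (0 <= RInt g c B); [|lra].
    apply RInt_ge_0. lra. apply Hsub; auto; lra.
    intros x Hx. destruct (Hpos x ltac:(lra)); lra. }
  assert (Hlow : forall c, 0 <= c <= B -> RInt sK 0 c <= T * RInt g 0 B).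
  { intros c Hc.
    assert (Hex2 : ex_RInt (fun x => scal T (g x)) 0 c).
    { apply (@ex_RInt_scal R_CompleteNormedModule). apply Hgx. lra. }
    eapply Rle_trans. apply (RInt_le _ (fun x => scal T (g x))). lra. apply HsK; lra. exact Hex2.
    intros x Hx. apply HsB. lra.
    rewrite (@RInt_scal R_CompleteNormedModule) by (apply Hgx; lra).
    unfold scal; simpl; unfold mult; simpl.
    apply Rmult_le_compat_l; auto. }
  destruct (Rle_dec b B) as [HbB|HbB].
  - assert (RInt sK 0 b <= T * RInt g 0 B) by (apply Hlow; lra). lra.
  - assert (C := RInt_Chasles sK 0 B b (HsK B HB) (Hsub sK B b HB ltac:(lra) HsK)).
    unfold plus in C; simpl in C. rewrite <- C.
    assert (RInt sK 0 B <= T * RInt g 0 B) by (apply Hlow; lra).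
    assert (RInt sK B b <= RInt g B b).
    { apply RInt_le. lra. apply Hsub; auto; lra. apply Hsub; auto; lra.
      intros x Hx. destruct (Hpos x ltac:(lra)); lra. }
    assert (RInt g B b <= e) by (apply Htail; lra).
    lra.
Qed.

Definition Hn (f : R -> R) (p : R) (n : nat) : R -> R :=
  fun x => 2 * PI * f x * x ^ (2 * n + 1) * exp (- p * x ^ 2).

Lemma Hn_eq f p n x : Hn f p n x = c_integrand f 0 x * hk p (2 * n) x.
Proof.
  unfold Hn, c_integrand, hk. replace (2 * n + 1)%nat with (S (2 * n)) by lia.
  simpl. ring.
Qed.

Section S.
Variables (f : R -> R) (F p : R).
Hypothesis Hf : forall x, 0 <= x -> 0 <= f x <= F.
Hypothesis Hp : 0 < p.
Hypothesis Hg : forall b, 0 <= b -> ex_RInt (c_integrand f 0) 0 b.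

Lemma Hn_ex n b : 0 <= b -> ex_RInt (Hn f p n) 0 b.
Proof.
  intros Hb. apply ex_RInt_ext with (fun x => c_integrand f 0 x * hk p (2 * n) x).
  - intros x _. symmetry. apply Hn_eq.
  - apply prod_ex_RInt; auto. intros x _. apply continuity_pt_filterlim. apply hk_cont.
Qed.

Lemma Hn_nonneg n x : 0 <= x -> 0 <= Hn f p n x.
Proof.
  intros Hx. unfold Hn. apply Rmult_le_pos. apply Rmult_le_pos. apply Rmult_le_pos.
  generalize PI_RGT_0; lra. apply Hf; auto. apply pow_le; auto. apply Rlt_le, exp_pos.
Qed.

Lemma Hn_bound n b : 0 <= b -> RInt (Hn f p n) 0 b <= PI * F * INR (fact n) / p ^ (n + 1).
Proof.
  intros Hb.
  assert (Hex2 : ex_RInt (fun x => scal (2 * PI * F) (hk p (2 * n + 1) x)) 0 b).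
  { apply (@ex_RInt_scal R_CompleteNormedModule). apply hk_ex. }
  eapply Rle_trans. apply (RInt_le _ (fun x => scal (2 * PI * F) (hk p (2 * n + 1) x))); auto. apply Hn_ex; auto.
  - intros x Hx. unfold Hn, hk. change (scal (2 * PI * F) ?y) with ((2 * PI * F) * y).
    assert (0 <= x ^ (2 * n + 1) * exp (- p * x ^ 2)).
    { apply Rmult_le_pos. apply pow_le; lra. apply Rlt_le, exp_pos. }
    assert (f x <= F) by (apply Hf; lra).
    assert (0 < 2 * PI) by (generalize PI_RGT_0; lra).
    rewrite Rmult_assoc.
    apply Rmult_le_compat_r; auto. apply Rmult_le_compat_l; lra.
  - rewrite (@RInt_scal R_CompleteNormedModule) by apply hk_ex.
    unfold scal; simpl. unfold mult; simpl.
    assert (HG := gamma_bound p n b Hp Hb).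
    assert (0 <= 2 * PI * F).
    { assert (0 <= F) by (destruct (Hf 0); lra). generalize PI_RGT_0; nra. }
    eapply Rle_trans. apply Rmult_le_compat_l. auto. exact HG.
    right. rewrite pow_add. field. repeat split; try apply pow_nonzero; lra.
Qed.

Lemma cp_props n : 0 <= cp f (2 * n) p /\
  forall eps, 0 < eps -> exists b0, forall b, b0 < b ->
    Rabs (RInt (Hn f p n) 0 b - cp f (2 * n) p) < eps.
Proof.
  exact (mono_lim (Hn f p n) _ (Hn_nonneg n) (fun b Hb => Hn_ex n b Hb) (fun b Hb => Hn_bound n b Hb)).
Qed.

End S.

Definition RI (h : R -> R) (a b : R) : R := RInt h a b.

Lemma pow2k x k : x ^ (2 * k) = (x ^ 2) ^ k.
Proof. apply pow_mult. Qed.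

Lemma fact_pos k : 0 < INR (fact k).
Proof. apply lt_0_INR, lt_O_fact. Qed.

Lemma exp_ex_term_le1 s k : 0 <= s -> exp (- s) * ex_term s k <= 1.
Proof.
  intros Hs. assert (H := exp_sum_le s k k Hs). rewrite sum_n_n in H.
  rewrite exp_Ropp. assert (0 < exp s) by apply exp_pos.
  apply Rmult_le_reg_l with (exp s); auto.
  rewrite <- Rmult_assoc, Rinv_r by lra. lra.
Qed.

Section T.
Variables (f : R -> R) (F p r a : R).
Hypothesis Hf : forall x, 0 <= x -> 0 <= f x <= F.
Hypothesis Hp : 0 < p.
Hypothesis Hg : forall b, 0 <= b -> ex_RInt (c_integrand f 0) 0 b.
Hypothesis Hr : 0 <= r.
Hypothesis Ha : 0 < a.

Definition u (k : nat) (b : R) : R :=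
  a * exp (- p * r ^ 2) * (RI (Hn f p k) 0 b * p ^ (2 * k) / INR (fact k) ^ 2 * r ^ (2 * k)).

Definition Kn (k : nat) (x : R) : R :=
  c_integrand f 0 x * (ex_term (p * x ^ 2) k * exp (- p * x ^ 2)).

Lemma u_B k b : 0 <= b ->
  u k b <= a * PI * F / p * (exp (- (p * r ^ 2)) * ex_term (p * r ^ 2) k).
Proof.
  intros Hb. unfold u.
  assert (HR0 : RI (Hn f p k) 0 b <= PI * F * INR (fact k) / p ^ (k + 1)).
  { apply Hn_bound; auto. }
  assert (Hfk := fact_pos k).
  eapply Rle_trans.
  { apply Rmult_le_compat_l.
    { apply Rmult_le_pos. lra. apply Rlt_le, exp_pos. }
    unfold Rdiv. apply Rmult_le_compat_r. apply pow_le; auto.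
    apply Rmult_le_compat_r. apply Rlt_le, Rinv_0_lt_compat, pow_lt; auto.
    apply Rmult_le_compat_r. apply pow_le; lra.
    exact HR0. }
  right. unfold ex_term. rewrite (pow2k p k), (pow2k r k), Rpow_mult_distr, pow_add.
  replace ((p ^ 2) ^ k) with (p ^ k * p ^ k) by (rewrite <- Rpow_mult_distr; f_equal; ring).
  replace (- p * r ^ 2) with (- (p * r ^ 2)) by ring.
  field. repeat split; try apply pow_nonzero; lra.
Qed.

Lemma Kn_eq k x : Kn k x = scal (p ^ k / INR (fact k)) (Hn f p k x).
Proof.
  unfold Kn, Hn, ex_term, c_integrand. change (scal ?c ?y) with (c * y).
  rewrite Rpow_mult_distr.
  replace (x ^ (0 + 1)) with x by (simpl; ring).
  replace (x ^ (2 * k + 1)) with (x * (x ^ 2) ^ k)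
    by (rewrite <- pow2k, pow_add; ring).
  field. apply Rgt_not_eq, fact_pos.
Qed.

Lemma Kn_ex k b : 0 <= b -> ex_RInt (Kn k) 0 b.
Proof.
  intros Hb. apply ex_RInt_ext with (fun x => scal (p ^ k / INR (fact k)) (Hn f p k x)).
  - intros x _. symmetry. apply Kn_eq.
  - apply (@ex_RInt_scal R_CompleteNormedModule). apply Hn_ex; auto.
Qed.

Lemma RI_Kn k b : 0 <= b -> RI (Kn k) 0 b = p ^ k / INR (fact k) * RI (Hn f p k) 0 b.
Proof.
  intros Hb. unfold RI.
  rewrite (RInt_ext (Kn k) (fun x => scal (p ^ k / INR (fact k)) (Hn f p k x))).
  - rewrite (@RInt_scal R_CompleteNormedModule). reflexivity. apply Hn_ex; auto.
  - intros x _. apply Kn_eq.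
Qed.

Lemma Kn_nonneg k x : 0 <= x -> 0 <= Kn k x.
Proof.
  intros Hx. unfold Kn, c_integrand. apply Rmult_le_pos.
  - apply Rmult_le_pos. apply Rmult_le_pos. generalize PI_RGT_0; lra. apply Hf; auto.
    apply pow_le; auto.
  - apply Rmult_le_pos. apply ex_term_nonneg. apply Rmult_le_pos. lra. apply pow_le; auto.
    apply Rlt_le, exp_pos.
Qed.

Lemma u_A k b : 0 <= b -> u k b <= a * RI (Kn k) 0 b.
Proof.
  intros Hb. rewrite RI_Kn by auto. unfold u.
  assert (Hfk := fact_pos k).
  assert (H1 := exp_ex_term_le1 (p * r ^ 2) k ltac:(apply Rmult_le_pos; [lra|apply pow_le; auto])).
  assert (H2 : 0 <= p ^ k / INR (fact k) * RI (Hn f p k) 0 b).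
  { rewrite <- RI_Kn by auto. unfold RI. apply RInt_ge_0; auto. apply Kn_ex; auto.
    intros x Hx. apply Kn_nonneg. lra. }
  replace (a * exp (- p * r ^ 2) *
    (RI (Hn f p k) 0 b * p ^ (2 * k) / INR (fact k) ^ 2 * r ^ (2 * k)))
   with (a * (exp (- (p * r ^ 2)) * ex_term (p * r ^ 2) k) * (p ^ k / INR (fact k) * RI (Hn f p k) 0 b)).
  2:{ unfold ex_term. rewrite (pow2k p k), (pow2k r k), Rpow_mult_distr.
      replace ((p ^ 2) ^ k) with (p ^ k * p ^ k) by (rewrite <- Rpow_mult_distr; f_equal; ring).
      replace (- p * r ^ 2) with (- (p * r ^ 2)) by ring.
      field. lra. }
  rewrite <- (Rmult_1_r a) at 2.
  apply Rmult_le_compat_r; auto. apply Rmult_le_compat_l; lra.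
Qed.

End T.

Lemma ex_term_mono y z k : 0 <= y <= z -> ex_term y k <= ex_term z k.
Proof.
  intros H. unfold ex_term, Rdiv. apply Rmult_le_compat_r.
  apply Rlt_le, Rinv_0_lt_compat, fact_pos. apply pow_incr; auto.
Qed.

Lemma sum_exp_le1 y N M : 0 <= y -> exp (- y) * sum_n_m (ex_term y) N M <= 1.
Proof.
  intros Hy. assert (H := exp_sum_le y N M Hy). rewrite exp_Ropp.
  assert (0 < exp y) by apply exp_pos.
  apply Rmult_le_reg_l with (exp y); auto.
  rewrite <- Rmult_assoc, Rinv_r by lra. lra.
Qed.

Lemma sum_nm_scal (c : R) (v : nat -> R) N M :
  sum_n_m (fun k => c * v k) N M = c * sum_n_m v N M.
Proof. exact (@sum_n_m_mult_l R_Ring c v N M). Qed.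

Lemma main_bound f F a l0 : (forall x, 0 <= x -> 0 <= f x <= F) -> 0 < a ->
  is_RInt_gen (c_integrand f 0) (at_point 0) (Rbar_locally p_infty) l0 ->
  forall eps, 0 < eps -> exists N0, forall N M, (N0 <= N)%nat -> forall r p, 0 <= r -> 0 <= p ->
    sum_n_m (fun k => Rabs (term f a k r p)) N M <= eps.
Proof.
  intros Hf Ha Hl eps Heps.
  assert (Hg := gen_ex_RInt _ _ Hl).
  assert (HF : 0 <= F) by (destruct (Hf 0); lra).
  assert (HPI := PI_RGT_0).
  set (g := c_integrand f 0).
  assert (Hgpos : forall x, 0 <= x -> 0 <= g x).
  { intros x Hx. unfold g, c_integrand. apply Rmult_le_pos. apply Rmult_le_pos. lra.
    apply Hf; auto. apply pow_le; auto. }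
  destruct (gen_tail _ _ Hl (eps / (2 * a))) as [B [HB0 HB]].
  { apply Rdiv_lt_0_compat; lra. }
  set (GB := RInt g 0 B).
  assert (HGB : 0 <= GB).
  { unfold GB. apply RInt_ge_0; auto. intros; apply Hgpos; lra. }
  set (P0 := 2 * a * PI * F / eps + 1).
  assert (HP0a : 0 <= 2 * a * PI * F / eps).
  { apply Rdiv_le_0_compat; auto. apply Rmult_le_pos; auto. nra. }
  assert (HP0 : 0 < P0) by (unfold P0; lra).
  destruct (exp_tail (P0 * B ^ 2) ltac:(apply Rmult_le_pos; [lra | apply pow_le; auto])
     (eps / (2 * a * (GB + 1)))) as [N1 HN1].
  { apply Rdiv_lt_0_compat; auto. apply Rmult_lt_0_compat; lra. }
  exists (Nat.max N1 1). intros N M HN r p Hr Hp.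
  destruct (Rle_lt_or_eq_dec 0 p Hp) as [Hp'|Hp0].
  2:{ subst p. rewrite (sum_n_m_ext_loc _ (fun _ => 0)).
      - rewrite sum_n_m_const. lra.
      - intros k Hk. replace (term f a k r 0) with 0. apply Rabs_R0.
        unfold term. rewrite pow_i by lia. unfold Rdiv. ring. }
  assert (Hcp : forall k, 0 <= cp f (2 * k) p /\
     forall e, 0 < e -> exists b0, forall b, b0 < b ->
       Rabs (RInt (Hn f p k) 0 b - cp f (2 * k) p) < e).
  { intros k. eapply cp_props; eauto. }
  assert (Htn : forall k, 0 <= term f a k r p).
  { intros k. unfold term. destruct (Hcp k) as [Hc _].
    assert (Hfk := fact_pos k).
    apply Rmult_le_pos. apply Rmult_le_pos. lra. apply Rlt_le, exp_pos.
    apply Rmult_le_pos. apply Rdiv_le_0_compat. apply Rmult_le_pos; auto. apply pow_le; lra.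
    apply pow_lt; auto. apply pow_le; auto. }
  rewrite (sum_n_m_ext _ (fun k => term f a k r p)).
  2:{ intros k. apply Rabs_right. apply Rle_ge. auto. }
  apply (sum_lim_le (u f p r a) (fun k => term f a k r p)).
  - intros k e He. destruct (Hcp k) as [_ Hc].
    set (C := a * exp (- p * r ^ 2) * (p ^ (2 * k) / INR (fact k) ^ 2 * r ^ (2 * k))).
    assert (HC : 0 < Rabs C + 1) by (generalize (Rabs_pos C); lra).
    destruct (Hc (e / (Rabs C + 1))) as [b0 Hb0]. apply Rdiv_lt_0_compat; lra.
    exists b0. intros b Hb.
    assert (Heq : u f p r a k b - term f a k r p = C * (RI (Hn f p k) 0 b - cp f (2 * k) p)).
    { unfold u, term, C. unfold Rdiv. ring. }
    rewrite Heq.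
    rewrite Rabs_mult. specialize (Hb0 b Hb). unfold RI.
    apply Rle_lt_trans with (Rabs C * (e / (Rabs C + 1))).
    { apply Rmult_le_compat_l. apply Rabs_pos. lra. }
    apply Rlt_le_trans with ((Rabs C + 1) * (e / (Rabs C + 1))).
    { apply Rmult_lt_compat_r. apply Rdiv_lt_0_compat; lra. lra. }
    right; field; lra.
  - intros b Hb. destruct (Rle_lt_dec P0 p) as [HpB|HpA].
    + eapply Rle_trans. apply sum_n_m_le. intros k. eapply u_B; eauto.
      set (s := p * r ^ 2).
      assert (Hs : 0 <= s) by (unfold s; apply Rmult_le_pos; [lra | apply pow_le; auto]).
      rewrite (sum_n_m_ext _ (fun k => (a * PI * F / p * exp (- s)) * (ex_term s k))).
      2:{ intros k. symmetry. apply Rmult_assoc. }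
      rewrite sum_nm_scal.
      assert (H1 := sum_exp_le1 s N M Hs).
      assert (H2 : 0 <= a * PI * F / p).
      { apply Rdiv_le_0_compat; auto. apply Rmult_le_pos; auto. nra. }
      apply Rle_trans with (a * PI * F / p).
      { rewrite Rmult_assoc. rewrite <- (Rmult_1_r (a * PI * F / p)) at 2.
        apply Rmult_le_compat_l; auto. }
      assert (HeP : eps * P0 = 2 * a * PI * F + eps) by (unfold P0; field; lra).
      apply Rmult_le_reg_r with p; auto.
      unfold Rdiv. rewrite Rmult_assoc, Rinv_l by lra.
      assert (eps * P0 <= eps * p) by (apply Rmult_le_compat_l; lra).
      assert (0 <= a * PI * F) by (apply Rmult_le_pos; auto; nra).
      lra.
    + eapply Rle_trans. apply sum_n_m_le. intros k. eapply u_A; eauto.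
      set (sK := fun x => sum_n_m (fun k => Kn f p k x) N M).
      assert (HsK_is : forall c, 0 <= c ->
         is_RInt sK 0 c (sum_n_m (fun k => RInt (Kn f p k) 0 c) N M)).
      { intros c Hc. apply is_RInt_sum. intros k. eapply Kn_ex; eauto. }
      rewrite sum_nm_scal.
      assert (Hsum : @eq R (sum_n_m (fun k => RI (Kn f p k) 0 b) N M) (RI sK 0 b)).
      { unfold RI. symmetry. apply is_RInt_unique. exact (HsK_is b Hb). }
      rewrite Hsum. unfold RI.
      set (T := sum_n_m (ex_term (P0 * B ^ 2)) N M).
      assert (HT : 0 <= T).
      { apply sum_nm_nonneg. intros; apply ex_term_nonneg. apply Rmult_le_pos; [lra | apply pow_le; auto]. }
      assert (HTlt : T < eps / (2 * a * (GB + 1))) by (apply HN1; lia).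
      assert (HsKeq : forall x, sK x = g x * (exp (- (p * x ^ 2)) * sum_n_m (ex_term (p * x ^ 2)) N M)).
      { intros x. unfold sK, Kn.
        rewrite (sum_n_m_ext _ (fun k => (g x * exp (- (p * x ^ 2))) * (ex_term (p * x ^ 2) k))).
        2:{ intros k. fold g. replace (- p * x ^ 2) with (- (p * x ^ 2)) by ring. match goal with |- ?A = ?B => change (@eq R A B) end. ring. }
        rewrite sum_nm_scal. match goal with |- ?A = ?B => change (@eq R A B) end. ring. }
      assert (HKB := sumK_bound g sK B T b (eps / (2 * a)) HB0 Hb HT
         (fun c Hc => ex_intro _ _ (HsK_is c Hc)) Hg).
      assert (Hfin : RInt sK 0 b <= T * RInt g 0 B + eps / (2 * a)).
      { apply HKB.
        - intros x Hx. rewrite HsKeq.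
          assert (Hy : 0 <= p * x ^ 2) by (apply Rmult_le_pos; [lra | apply pow_le; auto]).
          assert (H1 := sum_exp_le1 _ N M Hy).
          assert (H0 : 0 <= exp (- (p * x ^ 2)) * sum_n_m (ex_term (p * x ^ 2)) N M).
          { apply Rmult_le_pos. apply Rlt_le, exp_pos. apply sum_nm_nonneg. intros; apply ex_term_nonneg; auto. }
          specialize (Hgpos x Hx). split. apply Rmult_le_pos; auto.
          rewrite <- (Rmult_1_r (g x)) at 2. apply Rmult_le_compat_l; auto.
        - intros x Hx. rewrite HsKeq. specialize (Hgpos x ltac:(lra)).
          rewrite Rmult_comm. apply Rmult_le_compat_r; auto.
          assert (Hy : 0 <= p * x ^ 2) by (apply Rmult_le_pos; [lra | apply pow_le; lra]).
          assert (Hyb : p * x ^ 2 <= P0 * B ^ 2).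
          { apply Rmult_le_compat; try lra. apply pow_le; lra. apply pow_incr; lra. }
          assert (Hse : sum_n_m (ex_term (p * x ^ 2)) N M <= T).
          { apply sum_n_m_le. intros k. apply ex_term_mono; lra. }
          assert (Hsn : 0 <= sum_n_m (ex_term (p * x ^ 2)) N M).
          { apply sum_nm_nonneg. intros; apply ex_term_nonneg; auto. }
          assert (HE : exp (- (p * x ^ 2)) <= 1).
          { destruct (Req_dec (p * x ^ 2) 0) as [E|E].
            rewrite E, Ropp_0, exp_0; lra.
            left. rewrite <- exp_0. apply exp_increasing. lra. }
          rewrite <- (Rmult_1_l T). apply Rmult_le_compat; auto. apply Rlt_le, exp_pos.
        - auto. }
      fold GB in Hfin.
      assert (HTG : T * GB <= eps / (2 * a)).
      { apply Rle_trans with (eps / (2 * a * (GB + 1)) * GB).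
        apply Rmult_le_compat_r; lra.
        replace (eps / (2 * a * (GB + 1)) * GB) with (eps / (2 * a) * (GB / (GB + 1))) by (field; lra).
        assert (Hq : GB / (GB + 1) <= 1).
        { unfold Rdiv; apply Rmult_le_reg_r with (GB + 1); [lra|].
          rewrite Rmult_assoc, Rinv_l by lra; lra. }
        assert (0 < eps / (2 * a)) by (apply Rdiv_lt_0_compat; lra).
        apply Rle_trans with (eps / (2 * a) * 1); [apply Rmult_le_compat_l; lra | lra]. }
      assert (Hfin2 : RInt sK 0 b <= eps / a).
      { eapply Rle_trans. exact Hfin. replace (eps / a) with (eps / (2 * a) + eps / (2 * a)) by (field; lra).
        lra. }
      apply Rmult_le_reg_l with (/ a). apply Rinv_0_lt_compat; lra.
      rewrite <- Rmult_assoc, Rinv_l by lra. rewrite Rmult_1_l.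
      rewrite Rmult_comm. exact Hfin2.
Qed.


Theorem lemma6 (f : R -> R) (a : R) :
  cond1 f -> cond2a f -> 0 < a ->
  unif_series_cv (fun n r p => Rabs (term f a n r p)) /\
  unif_series_cv (term f a).
Proof.
  intros [[F HF] [[l0 Hl0] _]] _ Ha.
  apply unif_from_cauchy.
  exact (main_bound f F a l0 HF Ha Hl0).
Qed.
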